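(* Assume Assumptions A and B, with $F$ the supercell of Assumption B. There exist constants $\delta>0$ and $n\ge1$ such that for every cell $K$ and every admissible configuration $X\in\Omega$ with respect to which $K$ is incorrect, either $X_{K^{(1)}}=\emptyset$, or there exists $x\in X_{K^{(n)}}$ with $p_*\,v(x\mid X)\ge\mu_x+\delta$.
   Context: Setup. Fix $d\ge1$, a non-degenerate real $d\times d$ matrix $B$, the lattice $\mathbb{L}=B\mathbb{Z}^d$, and a set $\mathbb{G}\subset\mathbb{R}^d$ that is the union of finitely many disjoint translates of $\mathbb{L}$. Fix non-empty bounded sets $T_1,\dots,T_k\subset\mathbb{R}^d$ (tiles) and a unit vector $\vec\mu=(\mu_1,\dots,\mu_k)\in\mathbb{R}^k$ with $\mu_1,\dots,\mu_k>0$. An admissible configuration is a map $\omega:\mathbb{G}\to\{0,1,\dots,k\}$ such that $\operatorname{int}(u+T_{\omega(u)})\cap\operatorname{int}(v+T_{\omega(v)})=\emptyset$ for all distinct $u,v\in\mathbb{G}$ with $\omega(u),\omega(v)\neq0$; it is identified with the set $X=\{(v,\omega(v)):v\in\mathbb{G},\ \omega(v)\neq0\}$ and called non-empty if this set is non-empty. For $x=(v,i)\in X$ write $T_x=v+T_i$, $\mu_x=\mu_i$; for $t\in\mathbb{L}$ write $t+x=(t+v,i)$, $t+X=\{t+x:x\in X\}$; for $\Lambda\subset\mathbb{R}^d$ write $X_\Lambda=\{(v,i)\in X:v\in\Lambda\}$. $\Omega$ is the set of admissible configurations with the topology of local convergence: $X_n\to X$ iff for every bounded $\Lambda\subset\mathbb{R}^d$,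 $(X_n)_\Lambda=X_\Lambda$ for all large $n$. A configuration is periodic if it is non-empty and invariant under translation by a full-rank sublattice of $\mathbb{L}$. Volume allocation. Let $S\subset\mathbb{R}^d$ be an $\mathbb{L}$-invariant set with an $\mathbb{L}$-invariant measure $\lambda$. A volume allocation is a family of measurable functions $\phi_x(\cdot\mid X):S\to[0,1]$, one for each non-empty $X\in\Omega$ and $x\in X$, such that (i) $\phi_{t+x}(t+s\mid t+X)=\phi_x(s\mid X)$ for $\lambda$-a.e. $s$, for all $t\in\mathbb{L}$; (ii) whenever $X_n\to X$ in $\Omega$ and $x\in X_n$ for all $n$, $x\in X$, then $\liminf_n\phi_x(\cdot\mid X_n)\ge\phi_x(\cdot\mid X)$ $\lambda$-a.e.; (iii) $\sum_{x\in X}\phi_x(\cdot\mid X)=1$ $\lambda$-a.e. The allocated volume is $v(x\mid X)=\int_S\phi_x(s\mid X)\,\lambda(ds)$. Assumption A. There exist a volume allocation and $p_*>0$ such that (a) $p_*\,v(x\mid X)\ge\mu_x$ for every non-empty $X\in\Omega$ and $x\in X$; (b) there are only finitely many non-empty $\overline X\in\Omega$, called perfect configurations, with $p_*\,v(x\mid\overline X)=\mu_x$ for all $x\in\overline X$. Supercells. For a full-rank sublattice $\mathbb{K}\subset\mathbb{L}$, a supercell of $\mathbb{K}$ is a set $G=A[0,1)^d$ with $A\mathbb{Z}^d$ a full-rank sublattice of $\mathbb{K}$; its grid is $\mathcal{L}^G=A\mathbb{Z}^d$. A supercell of a periodic configuration $X$ is a supercell of $\{t\in\mathbb{L}:t+X=X\}$;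 a supercell common to several periodic configurations is a supercell of each of them. For $G=A[0,1)^d$ and $n\ge0$ put $G^{(n)}=\bigcup_{m\in\{-n,\dots,n\}^d}(Am+G)$. For a supercell $F$, cells are the sets $t+F$, $t\in\mathcal{L}^F$, and a set is $F$-measurable if it is a union of cells. $F$ is larger than the interaction radius if whenever $\Lambda,\Lambda'$ are $F$-measurable with disjoint closures, $X,X'\in\Omega$, $x\in X_\Lambda$, $y\in X'_{\Lambda'}$, then $\operatorname{int}T_x\cap\operatorname{int}T_y=\emptyset$. For a perfect $\overline X$ and $X\in\Omega$, a cell $K$ is $\overline X$-correct with respect to $X$ if $X_{K^{(1)}}=\overline X_{K^{(1)}}$; $K$ is correct if it is $\overline X$-correct for some perfect $\overline X$, and incorrect otherwise. Assumption B. There is a supercell $F$ common to all perfect configurations and larger than the interaction radius such that, for every perfect $\overline X$ and every $X\in\Omega$ with respect to which $F$ is $\overline X$-correct, $\phi_x(\cdot\mid X)=\phi_x(\cdot\mid\overline X)$ $\lambda$-a.e. for every $x\in X_F$. *)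

(* Defs.v *)
From HB Require Import structures.
From mathcomp Require Import all_boot all_order all_algebra.
From mathcomp Require Import all_classical all_reals all_analysis.
Set Implicit Arguments. Unset Strict Implicit. Unset Printing Implicit Defensive.
Import Order.TTheory GRing.Theory Num.Theory.
Import numFieldNormedType.Exports.
Local Open Scope classical_set_scope.
Local Open Scope ring_scope.

Section Tilings.
Variables (R : realType) (d k : nat).

Definition Vec := 'cV[R]_d.
(* R^d with its Borel sigma-algebra (same carrier as Vec) *)
Definition BVec := g_sigma_algebraType (@open Vec).

(* configurations, identified with sets of pairs (v, i), tile index i : 'I_k
   standing for tile number i+1 *)
Definition Conf := set (Vec * 'I_k).

Definition intvec (z : 'cV[int]_d) : Vec := map_mx (fun a : int => a%:~R) z.

Definition lat (M : 'M[R]_d) : set Vec := [set M *m intvec z | z in [set: 'cV[int]_d]].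

Definition union_of_translates (B : 'M[R]_d) (G : set Vec) :=
  exists a : seq Vec,
    (forall i j, (i < size a)%N -> (j < size a)%N -> i != j ->
       [set nth 0 a i + t | t in lat B] `&` [set nth 0 a j + t | t in lat B] = set0)
    /\ G = [set y | exists i, (i < size a)%N /\ exists2 t, lat B t & y = nth 0 a i + t].

Definition tile (T : 'I_k -> set Vec) (x : Vec * 'I_k) : set Vec :=
  [set x.1 + y | y in T x.2].

Definition shiftp (t : Vec) (x : Vec * 'I_k) : Vec * 'I_k := (t + x.1, x.2).
Definition shiftc (t : Vec) (X : Conf) : Conf := shiftp t @` X.

Definition restr (X : Conf) (L : set Vec) : Conf := [set x | X x /\ L x.1].

Definition admissible (G : set Vec) (T : 'I_k -> set Vec) (X : Conf) :=
  [/\ (forall x, X x -> G x.1),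
      (forall x y, X x -> X y -> x.1 = y.1 -> x = y) &
      (forall x y, X x -> X y -> x.1 <> y.1 ->
         interior (tile T x) `&` interior (tile T y) = set0)].

Definition local_conv (Xn : nat -> Conf) (X : Conf) :=
  forall L : set Vec, bounded_set L ->
    exists N, forall n, (N <= n)%N -> restr (Xn n) L = restr X L.

Definition invariant_space (B : 'M[R]_d) (S : set BVec)
    (lam : {measure set BVec -> \bar R}) :=
  [/\ measurable S,
      (forall t s, lat B t -> (S s <-> S ((t + (s : Vec)) : BVec))) &
      (forall t (A : set BVec), lat B t -> measurable A -> A `<=` S ->
         lam [set s : BVec | A ((t + (s : Vec)) : BVec)] = lam A)].

Definition Phi := Conf -> Vec * 'I_k -> BVec -> R.

Definition volume_allocation (B : 'M[R]_d) (G : set Vec) (T : 'I_k -> set Vec)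
    (S : set BVec) (lam : {measure set BVec -> \bar R}) (phi : Phi) :=
  [/\ (forall X x, admissible G T X -> X !=set0 -> X x ->
         measurable_fun S (phi X x) /\
         forall s, S s -> 0 <= phi X x s <= 1),
      (* (i) *)
      (forall X x t, admissible G T X -> X !=set0 -> X x -> lat B t ->
         {ae lam, forall s : BVec, S s ->
            phi (shiftc t X) (shiftp t x) ((t + (s : Vec)) : BVec) = phi X x s}),
      (* (ii) *)
      (forall (Xn : nat -> Conf) X x,
         (forall n, admissible G T (Xn n)) -> admissible G T X ->
         local_conv Xn X -> (forall n, Xn n x) -> X x ->
         {ae lam, forall s : BVec, S s ->
            ((phi X x s)%:E <= limn_einf (fun n => (phi (Xn n) x s)%:E))%E}) &
      (* (iii) *)
      (forall X, admissible G T X -> X !=set0 ->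
         {ae lam, forall s : BVec, S s -> (\esum_(x in X) (phi X x s)%:E)%E = 1%E})].

Definition vol (S : set BVec) (lam : {measure set BVec -> \bar R}) (phi : Phi)
    (X : Conf) (x : Vec * 'I_k) : \bar R :=
  (\int[lam]_(s in S) (phi X x s)%:E)%E.

Definition perfect (G : set Vec) (T : 'I_k -> set Vec) (mu : 'I_k -> R)
    (S : set BVec) (lam : {measure set BVec -> \bar R}) (phi : Phi) (p : R)
    (X : Conf) :=
  [/\ admissible G T X, X !=set0 &
      forall x, X x -> (p%:E * vol S lam phi X x)%E = (mu x.2)%:E].

Definition assumptionA (G : set Vec) (T : 'I_k -> set Vec) (mu : 'I_k -> R)
    (S : set BVec) (lam : {measure set BVec -> \bar R}) (phi : Phi) (p : R) :=
  [/\ 0 < p,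
      (forall X x, admissible G T X -> X !=set0 -> X x ->
         ((mu x.2)%:E <= p%:E * vol S lam phi X x)%E) &
      finite_set (perfect G T mu S lam phi p)].

Definition periods (B : 'M[R]_d) (X : Conf) : set Vec :=
  [set t | lat B t /\ shiftc t X = X].

Definition periodic (B : 'M[R]_d) (X : Conf) :=
  X !=set0 /\ exists M : 'M[R]_d, M \in unitmx /\ lat M `<=` periods B X.

(* supercell A[0,1)^d (represented by the matrix A), with grid lat A *)
Definition unit_cube : set Vec := [set u | forall i, 0 <= u i 0 < 1].

Definition cell (A : 'M[R]_d) (t : Vec) : set Vec :=
  [set t + A *m u | u in unit_cube].

Definition supercell_of (B : 'M[R]_d) (X : Conf) (A : 'M[R]_d) :=
  [/\ periodic B X, A \in unitmx & lat A `<=` periods B X].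

Definition cellN (A : 'M[R]_d) (t : Vec) (n : nat) : set Vec :=
  [set y | exists m : 'cV[int]_d,
     (forall i, `|m i 0| <= n%:Z) /\ cell A (t + A *m intvec m) y].

Definition cell_measurable (A : 'M[R]_d) (L : set Vec) :=
  exists J : set Vec, J `<=` lat A /\ L = \bigcup_(t in J) cell A t.

Definition larger_than_radius (G : set Vec) (T : 'I_k -> set Vec) (A : 'M[R]_d) :=
  forall L L' : set Vec, cell_measurable A L -> cell_measurable A L' ->
    closure L `&` closure L' = set0 ->
    forall X X' x y, admissible G T X -> admissible G T X' ->
      restr X L x -> restr X' L' y ->
      interior (tile T x) `&` interior (tile T y) = set0.

Definition correct_wrt (A : 'M[R]_d) (t : Vec) (Xb X : Conf) :=
  restr X (cellN A t 1) = restr Xb (cellN A t 1).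

Definition assumptionB (B : 'M[R]_d) (G : set Vec) (T : 'I_k -> set Vec)
    (mu : 'I_k -> R) (S : set BVec) (lam : {measure set BVec -> \bar R})
    (phi : Phi) (p : R) (A : 'M[R]_d) :=
  [/\ A \in unitmx /\ lat A `<=` lat B,
      (forall Xb, perfect G T mu S lam phi p Xb -> supercell_of B Xb A),
      larger_than_radius G T A &
      (forall Xb X, perfect G T mu S lam phi p Xb -> admissible G T X ->
         correct_wrt A 0 Xb X ->
         forall x, restr X (cell A 0) x ->
           {ae lam, forall s : BVec, S s -> phi X x s = phi Xb x s})].

End Tilings.

(* Main.v *)
Require Import Defs.
From HB Require Import structures.
From mathcomp Require Import all_boot all_order all_algebra.
From mathcomp Require Import all_classical all_reals all_analysis.
From mathcomp Require Import measurable_realfun.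
Import Order.TTheory GRing.Theory Num.Theory.
Import numFieldNormedType.Exports.
Local Open Scope classical_set_scope.
Local Open Scope ring_scope.
From mathcomp Require Import zify.
Section Meas.
Variables (R : realType) (d : nat).
Local Notation Vec := (Vec R d).
Local Notation BVec := (BVec R d).
Lemma transl_measurable (t : Vec) :
  measurable_fun [set: BVec] (fun s : BVec => ((t + (s : Vec)) : BVec)).
Proof.
have e : @measurable _ BVec = <<s (@open Vec) >> by [].
apply: (@measurability _ _ _ _ _ _ _ e).
move=> _ [U oU <-]; rewrite setTI.
apply: sub_sigma_algebra.
move=> z /= Oz.
have := oU _ Oz.
rewrite /interior /=.
move=> h.
by move/nbhsDr: h.
Qed.

Variable k : nat.
Local Open Scope ereal_scope.
Lemma vol_shift (B : 'M[R]_d) G T S (lam : {measure set BVec -> \bar R}) (phi : Phi R d k)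
  (t : Vec) X x :
  invariant_space B S lam -> volume_allocation B G T S lam phi ->
  lat B t -> admissible G T X -> X !=set0 -> X x -> admissible G T (shiftc t X) ->
  vol S lam phi (shiftc t X) (shiftp t x) = vol S lam phi X x.
Proof.
move=> [mS Sinv laminv] [mphi phii _ _] Bt aX X0 Xx asX.
have sX0 : shiftc t X !=set0 by exists (shiftp t x); exists x.
have sXx : shiftc t X (shiftp t x) by exists x.
have [mg g01] := mphi _ _ asX sX0 sXx.
have [mf f01] := mphi _ _ aX X0 Xx.
set g := phi (shiftc t X) (shiftp t x).
set f := phi X x.
pose tau := (fun s : BVec => ((t + (s : Vec))%R : BVec)).
have mtau := transl_measurable t.
have tauS : tau @^-1` S = S.
  by apply/seteqP; split => s /=; rewrite -Sinv.
have mgt : measurable_fun S (g \o tau).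
  apply: (measurable_comp mS) => //; last exact: measurable_funS mtau.
  by move=> _ [s Ss <-]; rewrite /tau -Sinv.
rewrite /vol.
transitivity (\int[lam]_(s in S) ((EFin \o g) \o tau) s).
  rewrite -[in RHS]tauS -(ge0_integral_pushforward mtau) //; last first.
  - by move=> y /[!inE] Sy; rewrite lee_fin; have /andP[] := g01 _ Sy.
  - exact/measurable_EFinP.
  apply: eq_measure_integral => A mA AS.
  rewrite /pushforward.
  by rewrite /= /pushforward laminv.
apply: ae_eq_integral => //.
- exact/measurable_EFinP.
- exact/measurable_EFinP.
have := phii _ _ _ aX X0 Xx Bt.
apply: filterS => s h Ss /=.
by rewrite /g /tau h.
Qed.
End Meas.
Section Shift.
Variables (R : realType) (d k : nat).
Local Notation Vec := (Vec R d).
Local Notation Conf := (Conf R d k).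
Implicit Types (X : Conf) (t v : Vec) (B A : 'M[R]_d) (x y : Vec * 'I_k).

Lemma intvecD (z1 z2 : 'cV[int]_d) : intvec R (z1 + z2) = intvec R z1 + intvec R z2.
Proof. by apply/matrixP => i j; rewrite !mxE rmorphD. Qed.
Lemma intvecN (z : 'cV[int]_d) : intvec R (- z) = - intvec R z.
Proof. by apply/matrixP => i j; rewrite !mxE rmorphN. Qed.
Lemma intvec0 : intvec R (0 : 'cV[int]_d) = 0.
Proof. by apply/matrixP => i j; rewrite !mxE. Qed.

Lemma latD B u v : lat B u -> lat B v -> lat B (u + v).
Proof. by move=> [z1 _ <-] [z2 _ <-]; exists (z1 + z2) => //; rewrite intvecD mulmxDr. Qed.
Lemma latN B u : lat B u -> lat B (- u).
Proof. by move=> [z1 _ <-]; exists (- z1) => //; rewrite intvecN mulmxN. Qed.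
Lemma lat0 B : lat B 0.
Proof. by exists 0 => //; rewrite intvec0 mulmx0. Qed.

Lemma G_shift B G t v : union_of_translates B G -> lat B t -> G v -> G (t + v).
Proof.
move=> [a [_ ->]] Bt [i [ia [s Bs ->]]].
exists i; split => //; exists (t + s); first exact: latD.
by rewrite addrCA.
Qed.

Lemma shiftpK t x : shiftp (- t) (shiftp t x) = x.
Proof. by case: x => v i; rewrite /shiftp /= addKr. Qed.
Lemma shiftpKN t x : shiftp t (shiftp (- t) x) = x.
Proof. by case: x => v i; rewrite /shiftp /= addNKr. Qed.

Lemma shiftcE t X y : shiftc t X y <-> X (shiftp (- t) y).
Proof.
split; first by move=> [x Xx <-]; rewrite shiftpK.
by move=> h; exists (shiftp (- t) y) => //; rewrite shiftpKN.
Qed.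

Lemma shiftcK t X : shiftc (- t) (shiftc t X) = X.
Proof.
apply/seteqP; split => y.
  by move=> /shiftcE; rewrite opprK => /shiftcE; rewrite shiftpK.
by move=> Xy; apply/shiftcE; rewrite opprK; apply/shiftcE; rewrite shiftpK.
Qed.

Lemma interior_tile_shift (T : 'I_k -> set Vec) t x z :
  interior (tile T (shiftp t x)) z -> interior (tile T x) (- t + z).
Proof.
rewrite /interior -{1}[z](addNKr t) => /nbhsDr.
apply: filterS => w [y Ty] /= h; exists y => //.
by apply: (@addrI _ t); rewrite addrA.
Qed.

Lemma admissible_shift B G T t X : union_of_translates B G -> lat B t ->
  admissible G T X -> admissible G T (shiftc t X).
Proof.
move=> uG Bt [h1 h2 h3]; split.
- by move=> _ [x Xx <-]; apply: G_shift uG Bt (h1 _ Xx).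
- move=> _ _ [x Xx <-] [y Xy <-] /= e.
  by rewrite (h2 x y) // (addrI _ e).
- move=> _ _ [x Xx <-] [y Xy <-] /= e.
  have ne : x.1 <> y.1 by move=> e'; apply: e; rewrite e'.
  apply/seteqP; split => // z [/interior_tile_shift hx /interior_tile_shift hy].
  have H := h3 _ _ Xx Xy ne.
  have : (interior (tile T x) `&` interior (tile T y)) (- t + z) by split.
  by rewrite H.
Qed.

Lemma cellN_shift A t n v : cellN A t n (t + v) <-> cellN A 0 n v.
Proof.
split => -[m [mb [u cu e]]]; exists m; split => //; exists u => //.
  by apply: (@addrI _ t); rewrite add0r -e !addrA.
by rewrite -e add0r !addrA.
Qed.

Lemma restr_shift A t n X :
  restr (shiftc t X) (cellN A t n) = shiftc t (restr X (cellN A 0 n)).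
Proof.
apply/seteqP; split => y.
  by move=> [[x Xx <-] c]; exists x => //; split => //; move/cellN_shift: c.
by move=> [x [Xx c] <-]; split; [exists x|apply/cellN_shift].
Qed.
End Shift.
Section Cover.
Variables (R : realType) (d k : nat).
Local Notation Vec := (Vec R d).

Lemma entry_le_norm m n (v : 'M[R]_(m, n)) i j : `|v i j| <= `|v|.
Proof.
have -> : `|v| = mx_norm v by [].
rewrite mx_normrE.
exact: (le_bigmax 0 (fun ij : 'I_m * 'I_n => `|v ij.1 ij.2|) (i, j)).
Qed.

Lemma norm_le_entries m n (v : 'M[R]_(m, n)) M : 0 <= M ->
  (forall i j, `|v i j| <= M) -> `|v| <= M.
Proof.
move=> M0 h; have -> : `|v| = mx_norm v by [].
rewrite mx_normrE; apply: bigmax_le => // ij _; exact: h.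
Qed.

Lemma norm_mulmx_le m n p (M : 'M[R]_(m, n)) (v : 'M[R]_(n, p)) :
  `|M *m v| <= (`|M| *+ n) * `|v|.
Proof.
apply: norm_le_entries => [|i j]; first by rewrite mulr_ge0 ?mulrn_wge0.
rewrite mxE (le_trans (ler_norm_sum _ _ _)) //.
apply: (@le_trans _ _ (\sum_(c < n) `|M| * `|v|)).
  apply: ler_sum => c _; rewrite normrM.
  by apply: ler_pM => //; apply: entry_le_norm.
by rewrite sumr_const card_ord mulrnAl.
Qed.

Arguments entry_le_norm {m n}.
Arguments norm_le_entries {m n}.
Arguments norm_mulmx_le {m n p}.
Lemma bounded_ex (L : set Vec) : bounded_set L -> exists M, forall y, L y -> `|y| <= M.
Proof.
move=> [M0 [_ h]]; exists (M0 + 1) => y Ly.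
by apply: (h (M0 + 1)) => //; rewrite ltrDl.
Qed.

Lemma ex_bounded (L : set Vec) M : (forall y, L y -> `|y| <= M) -> bounded_set L.
Proof.
move=> h; rewrite /bounded_set /= /bounded_near.
exists M; split; first exact: num_real.
by move=> M1 hM y Ly /=; apply: le_trans (h _ Ly) (ltW hM).
Qed.

Definition zbox (M : nat) : seq 'cV[int]_d :=
  [seq map_mx (fun c : 'I_(M + M).+1 => (c%:Z - M%:Z)%R) w | w <- enum ('cV['I_(M + M).+1]_d)].

Lemma zbox_mem M (z : 'cV[int]_d) : (forall r, `|z r 0| <= M%:Z) -> z \in zbox M.
Proof.
move=> h.
pose w : 'cV['I_(M + M).+1]_d := map_mx (fun c : int => inord (absz (c + M%:Z)%R)) z.
have -> : z = map_mx (fun c : 'I_(M + M).+1 => (c%:Z - M%:Z)%R) w.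
  apply/matrixP => i j; rewrite !mxE.
  have hi := h i; rewrite (ord1 j).
  rewrite inordK; first by lia.
  by lia.
by apply: map_f; rewrite mem_enum.
Qed.
Lemma cover B G (L : set Vec) : B \in unitmx -> union_of_translates B G -> bounded_set L ->
  exists s : seq (Vec * 'I_k), forall x, G x.1 -> L x.1 -> x \in s.
Proof.
move=> uB [a [_ ->]] /bounded_ex [ML hL].
pose Sa := \big[Num.max/0]_(i < size a) `|nth 0 a i|.
pose K := (`|invmx B| *+ d) * (ML + Sa).
pose M := Num.Def.archi_bound `|K|.
exists [seq (nth 0 a p.1 + B *m intvec R p.2, j) | p <- [seq (i, z) | i <- iota 0 (size a), z <- zbox M], j <- enum 'I_k].
move=> [v j] /= [i [ia [t [z _ <-] ->]]] Lv.
apply: (@allpairs_f _ _ _ (fun p j => (nth 0 a p.1 + B *m intvec R p.2, j)) _ _ (i, z) j); last by rewrite mem_enum.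
apply: (@allpairs_f _ _ _ (fun i z => (i, z))); first by rewrite mem_iota.
apply: zbox_mem => r.
have ez : intvec R z = invmx B *m (nth 0 a i + B *m intvec R z - nth 0 a i).
  by rewrite addrC addKr mulKmx.
have nb : `|nth 0 a i| <= Sa.
  exact: (le_bigmax 0 (fun i0 : 'I_(size a) => `|nth 0 a i0|) (Ordinal ia)).
have h1 : `|(z r 0)%:~R : R| <= K.
  have -> : (z r 0)%:~R = (intvec R z) r 0 by rewrite mxE.
  apply: le_trans (entry_le_norm _ _ _) _.
  rewrite ez; apply: le_trans (norm_mulmx_le _ _) _.
  apply: ler_wpM2l; first exact: mulrn_wge0.
  apply: le_trans (ler_normB _ _) _.
  by apply: lerD => //; apply: hL.
have h2 : K < M%:R by apply: le_lt_trans (ler_norm K) (archi_boundP _).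
rewrite -intr_norm in h1.
have : (`|z r 0|%:~R : R) < (M%:Z)%:~R by apply: le_lt_trans h1 _.
by rewrite ltr_int => /ltW.
Qed.
End Cover.
Section Diag.
Variables (C : Type) (Y : nat -> C) (Q : nat -> C -> Prop).

Definition infp (P : nat -> Prop) := forall N, exists m, (N <= m)%N /\ P m.

Definition refine (P : nat -> Prop) q : nat -> Prop := fun m =>
  P m /\ (if pselect (infp (fun m => P m /\ Q q (Y m))) then Q q (Y m) else ~ Q q (Y m)).

Lemma infp_refine P q : infp P -> infp (refine P q).
Proof.
move=> iP; rewrite /refine; case: pselect => [h|h] //.
have [N0 hN0] : exists N0, forall m, (N0 <= m)%N -> ~ (P m /\ Q q (Y m)).
  apply: contrapT => hn; apply: h => N.
  apply: contrapT => hm; apply: hn; exists N => m Nm hPQ; apply: hm.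
  by exists m.
move=> N; have [m [Nm Pm]] := iP (maxn N N0).
exists m; split; first by apply: leq_trans Nm; rewrite leq_maxl.
split => // Qm; apply: (hN0 m); last by [].
by apply: leq_trans Nm; rewrite leq_maxr.
Qed.

Fixpoint Ps (q : nat) : nat -> Prop :=
  match q with 0 => fun _ => True | q'.+1 => refine (Ps q') q' end.

Lemma Ps_inf q : infp (Ps q).
Proof.
elim: q => [|q IH] /=; first by move=> N; exists N.
exact: infp_refine.
Qed.

Lemma Ps_mono q q' m : (q <= q')%N -> Ps q' m -> Ps q m.
Proof.
move=> /subnK <-; elim: (q' - q)%N => [|n IH] //= [h _].
exact: IH.
Qed.

Definition pk (P : nat -> Prop) (N : nat) : nat :=
  match pselect (exists m, (N <= m)%N /\ P m) with
  | left h => proj1_sig (cid h)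
  | right _ => N end.

Lemma pk_spec P N : infp P -> (N <= pk P N)%N /\ P (pk P N).
Proof.
move=> iP; rewrite /pk; case: pselect => [h|h]; last by exfalso; apply: h; apply: iP.
by case: (cid h).
Qed.

Fixpoint phid (j : nat) : nat :=
  match j with 0 => pk (Ps 1) 0 | j'.+1 => pk (Ps j'.+2) (phid j').+1 end.

Lemma phid_in j : Ps j.+1 (phid j).
Proof. by case: j => [|j]; apply: (pk_spec _ _ (Ps_inf _)).2. Qed.

Lemma phid_lt j : (phid j < phid j.+1)%N.
Proof. exact: (pk_spec _ _ (Ps_inf _)).1. Qed.

Lemma diagonal : exists phi : nat -> nat, (forall j, (phi j < phi j.+1)%N) /\
  forall q, (forall j, (q <= j)%N -> Q q (Y (phi j))) \/
            (forall j, (q <= j)%N -> ~ Q q (Y (phi j))).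
Proof.
exists phid; split; first exact: phid_lt.
move=> q.
have H j : (q <= j)%N -> Ps q.+1 (phid j).
  by move=> qj; apply: (@Ps_mono q.+1 j.+1 (phid j) _ (phid_in j)).
case: (pselect (infp (fun m => Ps q m /\ Q q (Y m)))) => [h|h].
  left => j /H /= [_]; rewrite /refine; by case: pselect.
right => j /H /= [_]; rewrite /refine; by case: pselect.
Qed.
End Diag.
Section Compact.
Variables (R : realType) (d k : nat).
Local Notation Vec := (Vec R d).
Local Notation Conf := (Conf R d k).

Lemma compactness B G T (Y : nat -> Conf) : B \in unitmx -> union_of_translates B G ->
  (forall m, admissible G T (Y m)) ->
  exists phi : nat -> nat, (forall j, (phi j < phi j.+1)%N) /\
    exists X, local_conv (fun j => Y (phi j)) X.
Proof.
move=> uB uG aY.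
have [a [_ Ga]] := uG.
pose Q (q : nat) (c : Conf) : Prop :=
  match @unpickle (nat * 'cV[int]_d * 'I_k)%type q with
  | Some p => c (nth 0 a p.1.1 + B *m intvec R p.1.2, p.2)
  | None => False end.
have [phi [phiI hq]] := @diagonal _ Y Q.
exists phi; split => //.
pose X := fun x => exists J, forall j, (J <= j)%N -> Y (phi j) x.
exists X.
have stab x : exists N, forall j, (N <= j)%N -> (Y (phi j) x <-> X x).
  case: (pselect (G x.1)) => Gx.
    move: (Gx); rewrite Ga => -[i [ia [t [z _ <-] e]]].
    pose q := pickle (i, z, x.2).
    have eQ c : Q q c <-> c x.
      by rewrite /Q /q pickleK /= -e; case: x {Gx e q}.
    case: (hq q) => [hl|hr]; exists q => j qj.
      split => _; last exact/eQ/hl.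
      by exists q => j' /hl/eQ.
    split => [/eQ|]; first by have := hr j qj.
    move=> [J hJ]; exfalso; have := hr (maxn q J) (leq_maxl _ _); apply.
    by apply/eQ; apply: hJ; exact: leq_maxr.
  exists 0 => j _; split => [Yx|[J hJ]]; exfalso; apply: Gx.
    by have [h1 _ _] := aY (phi j); apply: h1.
  have [h1 _ _] := aY (phi J); exact: h1 _ (hJ J (leqnn J)).
move=> L bL.
have [s hs] := @cover R d k B G L uB uG bL.
have [N hN] : exists N, forall x, x \in s -> forall j, (N <= j)%N -> (Y (phi j) x <-> X x).
  elim: s {hs} => [|x s [N IH]]; first by exists 0.
  have [Nx hx] := stab x.
  exists (maxn N Nx) => y; rewrite in_cons => /orP [/eqP -> | ys] j hj.
    by apply: hx; exact: leq_trans (leq_maxr _ _) hj.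
  by apply: IH => //; exact: leq_trans (leq_maxl _ _) hj.
exists N => j hj; apply/seteqP; split => x [h Lx]; split => //.
  case: (pselect (G x.1)) => Gx; first by apply/(hN x (hs x Gx Lx) j hj).
  exfalso; apply: Gx; have [h1 _ _] := aY (phi j); exact: h1.
case: (pselect (G x.1)) => Gx; first by apply/(hN x (hs x Gx Lx) j hj).
exfalso; apply: Gx; move: h => [J hJ]; have [h1 _ _] := aY (phi J).
exact: h1 _ (hJ J (leqnn J)).
Qed.

Lemma bounded_set1 (v : Vec) : bounded_set [set v].
Proof. by apply: (@ex_bounded R d _ `|v|) => y ->. Qed.

Lemma lc_shift (Z : nat -> Conf) X N : local_conv Z X -> local_conv (fun j => Z (N + j)%N) X.
Proof.
move=> h L bL; have [M hM] := h L bL; exists M => n Mn; apply: hM.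
by apply: leq_trans Mn (leq_addl _ _).
Qed.

Lemma lc_ev (Z : nat -> Conf) X x : local_conv Z X -> X x ->
  exists N, forall n, (N <= n)%N -> Z n x.
Proof.
move=> h Xx; have [N hN] := h _ (bounded_set1 x.1).
exists N => n Nn; have := hN n Nn.
have : restr X [set x.1] x by split.
by move=> + e; rewrite -e => -[].
Qed.

Lemma admissible_limit G T (Z : nat -> Conf) X : (forall n, admissible G T (Z n)) ->
  local_conv Z X -> admissible G T X.
Proof.
move=> aZ lc; split.
- move=> x Xx; have [N hN] := lc_ev _ _ _ lc Xx.
  by have [h1 _ _] := aZ N; apply: h1; apply: hN.
- move=> x y Xx Xy e.
  have [N1 h1] := lc_ev _ _ _ lc Xx; have [N2 h2] := lc_ev _ _ _ lc Xy.
  have [_ h _] := aZ (maxn N1 N2); apply: h => //.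
    by apply: h1; exact: leq_maxl.
  by apply: h2; exact: leq_maxr.
- move=> x y Xx Xy e.
  have [N1 h1] := lc_ev _ _ _ lc Xx; have [N2 h2] := lc_ev _ _ _ lc Xy.
  have [_ _ h] := aZ (maxn N1 N2); apply: h => //.
    by apply: h1; exact: leq_maxl.
  by apply: h2; exact: leq_maxr.
Qed.
End Compact.
Section Fatou.
Variables (R : realType) (d k : nat).
Local Notation Vec := (Vec R d).
Local Notation Conf := (Conf R d k).
Local Open Scope ereal_scope.

Lemma vol_limit B G T S (lam : {measure set (BVec R d) -> \bar R}) (phi : Phi R d k)
  (Z : nat -> Conf) X x (c : \bar R) :
  invariant_space B S lam -> volume_allocation B G T S lam phi ->
  (forall n, admissible G T (Z n)) -> admissible G T X -> local_conv Z X ->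
  (forall n, Z n x) -> X x -> (forall n, vol S lam phi (Z n) x <= c) ->
  vol S lam phi X x <= c.
Proof.
move=> [mS _ _] [mphi _ phiii _] aZ aX lc Zx Xx hc.
have X0 : X !=set0 by exists x.
have Z0 n : Z n !=set0 by exists x.
have [mf f01] := mphi _ _ aX X0 Xx.
have mg n := (mphi _ _ (aZ n) (Z0 n) (Zx n)).
pose g n s := ((phi (Z n) x s)%:E).
have mgn n : measurable_fun S (g n) by apply/measurable_EFinP; exact: (mg n).1.
have g0 n s : S s -> 0 <= g n s.
  by move=> Ss; rewrite lee_fin; case/andP: ((mg n).2 s Ss).
rewrite /vol.
apply: (@le_trans _ _ (\int[lam]_(s in S) limn_einf (fun n => g n s))).
  apply: ae_ge0_le_integral => //.
  - by move=> s Ss; rewrite lee_fin; case/andP: (f01 s Ss).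
  - exact/measurable_EFinP.
  - move=> s Ss; rewrite limn_einf_lim; apply: lime_ge; first exact: is_cvg_einfs.
    apply: nearW => n; apply: le_ereal_inf_tmp => _ [m _ <-]; exact: g0.
  - rewrite /limn_einf; apply: measurableT_comp => //.
    apply: measurable_fun_limn_esup => n.
    exact: measurableT_comp.
  - exact: phiii.
apply: le_trans (@fatou _ _ _ lam S mS g mgn g0) _.
apply: le_trans (limn_einf_sup _) _.
rewrite limn_esup_lim; apply: lime_le; first exact: is_cvg_esups.
apply: nearW => n; apply: ge_ereal_sup => _ [m _ <-]; exact: hc.
Qed.
End Fatou.
Section CellN.
Variables (R : realType) (d : nat).
Local Notation Vec := (Vec R d).

Lemma cellN_mono (A : 'M[R]_d) t n n' v : (n <= n')%N -> cellN A t n v -> cellN A t n' v.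
Proof.
move=> nn [m [mb c]]; exists m; split => // i.
by apply: le_trans (mb i) _; rewrite lez_nat.
Qed.

Lemma cellN1_bounded (A : 'M[R]_d) : bounded_set (cellN A 0 1).
Proof.
apply: (@ex_bounded R d _ ((`|A| *+ d) * 2)) => _ [m [mb [u cu <-]]].
rewrite add0r -mulmxDr; apply: le_trans (norm_mulmx_le _ _ _ _ _ _) _.
apply: ler_wpM2l; first exact: mulrn_wge0.
apply: norm_le_entries => // i j; rewrite (ord1 j) !mxE.
apply: le_trans (ler_normD _ _) _.
rewrite -[2]/(1 + 1); apply: lerD.
  rewrite -intr_norm; have := mb i; rewrite -(ler_int R) => /le_trans; apply.
  by rewrite rmorph1.
have /andP[u0 u1] := cu i; rewrite ger0_norm //; exact: ltW.
Qed.

Lemma cellN_cover (A : 'M[R]_d) (v : Vec) : A \in unitmx -> exists n, cellN A 0 n v.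
Proof.
move=> uA.
pose w := invmx A *m v.
pose m : 'cV[int]_d := map_mx (fun r => Num.floor r) w.
exists (\max_(i < d) absz (m i ord0))%N; exists m; split.
  move=> i; rewrite lez_nat.
  exact: (@leq_bigmax_cond _ (fun _ => true) (fun i0 : 'I_d => absz (m i0 ord0)) i).
exists (w - intvec R m).
  move=> i.
  have -> : (w - intvec R m) i 0 = w i 0 - (Num.floor (w i 0))%:~R.
    by rewrite !mxE.
  have := floor_itv (w i 0); rewrite rmorphD /= rmorph1 => /andP[h1 h2].
  by rewrite subr_ge0 h1 /= ltrBlDl.
by rewrite add0r -mulmxDr addrC subrK /w mulKVmx.
Qed.
End CellN.
Lemma perfect_shift (R : realType) (d k : nat) (B : 'M[R]_d) G (T : 'I_k -> set (Vec R d)) mu S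
  (lam : {measure set (BVec R d) -> \bar R}) (phi : Phi R d k) p (Xb : Conf R d k) t :
  invariant_space B S lam -> volume_allocation B G T S lam phi ->
  union_of_translates B G -> lat B t -> perfect G T mu S lam phi p Xb ->
  perfect G T mu S lam phi p (shiftc t Xb).
Proof.
move=> inv va uG Bt [aXb [x0 Xx0] hv].
have aS := @admissible_shift _ _ _ _ _ T _ _ uG Bt aXb.
split => //; first by exists (shiftp t x0); exists x0.
move=> _ [x Xx <-].
rewrite (@vol_shift _ _ _ _ _ _ _ _ _ _ _ _ inv va Bt aXb (ex_intro _ x0 Xx0) Xx aS).
exact: hv.
Qed.

Theorem lemma6 (R : realType) (d k : nat)
  (B : 'M[R]_d) (G : set (Vec R d))
  (T : 'I_k -> set (Vec R d)) (mu : 'I_k -> R)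
  (S : set (BVec R d)) (lam : {measure set (BVec R d) -> \bar R})
  (phi : Phi R d k) (p : R) (A : 'M[R]_d) :
  (0 < d)%N ->
  B \in unitmx ->
  union_of_translates B G ->
  (forall i, T i !=set0 /\ bounded_set (T i)) ->
  (forall i, 0 < mu i) -> \sum_i mu i ^+ 2 = 1 ->
  invariant_space B S lam ->
  volume_allocation B G T S lam phi ->
  assumptionA G T mu S lam phi p ->
  assumptionB B G T mu S lam phi p A ->
  exists delta : R, 0 < delta /\
  exists n : nat, (1 <= n)%N /\
  forall z : 'cV[int]_d,
    let t := A *m intvec R z in
    forall X : Conf R d k, admissible G T X ->
      ~ (exists Xb, perfect G T mu S lam phi p Xb /\ correct_wrt A t Xb X) ->
      restr X (cellN A t 1) = set0 \/
      exists x, restr X (cellN A t n) x /\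
        ((mu x.2 + delta)%:E <= p%:E * vol S lam phi X x)%E.
Proof.
move=> d0 uB uG Tne mu0 musum inv va [p0 hA finP] [[uA AB] hsup larg hB].
pose dl (m : nat) : R := (m.+1%:R)^-1.
have dl0 m : 0 < dl m by rewrite invr_gt0.
pose Pm m (zX : 'cV[int]_d * Conf R d k) :=
  [/\ admissible G T zX.2,
      ~ (exists Xb, perfect G T mu S lam phi p Xb /\ correct_wrt A (A *m intvec R zX.1) Xb zX.2),
      restr zX.2 (cellN A (A *m intvec R zX.1) 1) <> set0 &
      forall x, restr zX.2 (cellN A (A *m intvec R zX.1) m.+1) x ->
        (p%:E * vol S lam phi zX.2 x < (mu x.2 + dl m)%:E)%E].
apply: contrapT => hneg.
have H m : exists zX, Pm m zX.
  apply: contrapT => hm; apply: hneg.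
  exists (dl m); split => //; exists m.+1; split => // z t X aX nc.
  case: (pselect (restr X (cellN A t 1) = set0)) => h0; [by left|right].
  apply: contrapT => hex; apply: hm; exists (z, X); split => //= x hx.
  rewrite ltNge; apply/negP => hle; apply: hex; by exists x.
have [f hf] := choice H.
pose tt m := A *m intvec R (f m).1.
pose XX m := (f m).2.
have ltt m : lat B (tt m) by apply: AB; exists (f m).1.
pose YY m := shiftc (- tt m) (XX m).
have aXX m : admissible G T (XX m) by case: (hf m).
have aYY m : admissible G T (YY m).
  exact: (@admissible_shift _ _ _ _ _ T _ _ uG (latN _ _ _ _ (ltt m)) (aXX m)).
have eXY m : XX m = shiftc (tt m) (YY m).
  by rewrite /YY -{1}[tt m]opprK shiftcK.
have restrE n m : restr (XX m) (cellN A (tt m) n) = shiftc (tt m) (restr (YY m) (cellN A 0 n)).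
  by rewrite {1}eXY restr_shift.
have volE m x : YY m x -> vol S lam phi (YY m) x = vol S lam phi (XX m) (shiftp (tt m) x).
  move=> /shiftcE; rewrite opprK => hx.
  rewrite {1}(_ : x = shiftp (- tt m) (shiftp (tt m) x)); last by rewrite shiftpK.
  apply: (@vol_shift _ _ _ _ _ _ _ _ _ _ _ _ inv va (latN _ _ _ _ (ltt m)) (aXX m) _ hx (aYY m)).
  by exists (shiftp (tt m) x).
have [ph [phI [X lc]]] := @compactness _ _ _ _ _ _ _ uB uG aYY.
have phge j : (j <= ph j)%N.
  by elim: j => [|j IH] //; apply: leq_ltn_trans IH (phI j).
pose Z j := YY (ph j).
have aZ j : admissible G T (Z j) := aYY _.
have aX := @admissible_limit _ _ _ _ _ _ _ aZ lc.
have [N1 hN1] := lc _ (cellN1_bounded _ _ A).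
have eN1 := hN1 N1 (leqnn _).
have [y hy] : exists y, restr (Z N1) (cellN A 0 1) y.
  have [_ _ ne _] := hf (ph N1).
  have /set0P [x' hx'] : restr (XX (ph N1)) (cellN A (tt (ph N1)) 1) != set0 by apply/eqP.
  by move: hx'; rewrite restrE => -[y hy _]; exists y.
have X0 : X !=set0 by move: hy; rewrite eN1 => -[hy _]; exists y.
have pX : perfect G T mu S lam phi p X.
  split => // x Xx.
  apply/eqP; rewrite eq_le (hA _ _ aX X0 Xx) andbT.
  apply/lee_addgt0Pr => e e0.
  have [m0 hm0] : exists m0, dl m0 < e.
    exists (Num.Def.archi_bound (e^-1)); rewrite /dl invf_plt ?posrE //.
    apply: lt_le_trans (archi_boundP _) _; first by rewrite invr_ge0 ltW.
    by rewrite ler_nat.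
  have [n0 hn0] := cellN_cover _ _ A x.1 uA.
  have [N2 hN2] := lc_ev _ _ _ _ _ _ lc Xx.
  pose J := maxn (maxn m0 n0) N2.
  have hJ j : [/\ (m0 <= ph (J + j))%N, (n0 <= ph (J + j))%N & (N2 <= J + j)%N].
    have h1 : (J <= ph (J + j))%N by apply: leq_trans (leq_addr j J) (phge _).
    split.
    - by apply: leq_trans h1; rewrite /J leq_max leq_max leqnn.
    - by apply: leq_trans h1; rewrite /J leq_max leq_max leqnn orbT.
    - by apply: leq_trans (leq_addr j J); rewrite /J leq_max leqnn orbT.
  have Zx j : Z (J + j) x by apply: hN2; case: (hJ j).
  have hZ j : (vol S lam phi (Z (J + j)%N) x <= (p^-1)%:E * (mu x.2 + e)%:E)%E.
    case: (hJ j) => hm hn _.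
    set jj := ph (J + j).
    have cx : cellN A 0 jj.+1 x.1 by apply: cellN_mono hn0; apply: leq_trans hn (leqnSn _).
    have hr : restr (XX jj) (cellN A (tt jj) jj.+1) (shiftp (tt jj) x).
      by rewrite restrE; exists x => //; split => //; exact: Zx.
    have [_ _ _ hlt] := hf jj.
    have := hlt _ hr.
    rewrite /Z -/jj volE //; last exact: Zx.
    move=> /ltW h; rewrite lee_pdivlMl //; apply: le_trans h _.
    rewrite lee_fin lerD2l /=; apply: le_trans (ltW hm0).
    rewrite /dl lef_pV2 ?posrE // ler_nat ltnS //.
  have := @vol_limit _ _ _ _ _ _ _ _ _ _ _ _ _ inv va (fun j => aZ (J + j)%N) aX
    (@lc_shift _ _ _ _ _ J lc) Zx Xx hZ.
  by rewrite lee_pdivlMl // EFinD.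
have [_ nc _ _] := hf (ph N1).
apply: nc; exists (shiftc (tt (ph N1)) X); split.
  exact: (@perfect_shift _ _ _ _ _ _ _ _ _ _ _ _ _ inv va uG (ltt _) pX).
by rewrite /correct_wrt -/(XX _) -/(tt _) restrE restr_shift -eN1.
Qed.
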